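(* In the setting described in the context, let \texttt{Orienteering} be a routine with constant-factor guarantee $1/\lambda$ ($\lambda\ge1$): for any node weights $\nu(j)\ge0$ it returns a path $\hat\rho\in\mathcal{X}(p_s,\omega)$ with $\sum_{j}\mathbb{I}_j(\hat\rho)\nu(j)\ge\frac1\lambda\sum_j\mathbb{I}_j(\rho)\nu(j)$ for all $\rho\in\mathcal{X}(p_s,\omega)$. For $\ell=1,2,\dots$, let $\hat\rho_\ell$ be the path returned by \texttt{Orienteering} with node weights $$\nu_\ell(j) = \zeta_j d_j\prod_{\iota=1}^{\ell-1}\left(1-\mathbb{E}\left[z_j(\hat{\rho}_{\iota})\right]\right).$$ Let $X^*_K=\{\rho_k^*\}_{k=1}^K$ be an optimal solution to the Team Surviving Orienteers problem with $K$ robots. Then for every $L\ge K$, with $\hat{X}_L = \{\hat{\rho}_{\ell}\}_{\ell=1}^L$, $$J(\hat{X}_L) \ge \left(1-e^{-\frac{p_sL}{\lambda K}}\right)J(X^*_K),$$ where $J(\{\rho_k\}_{k=1}^m)=\sum_{j=1}^V d_j\,\mathbb{E}\big[1-\prod_{k=1}^m(1-z_j(\rho_k))\big]$ is the weighted expected number of nodes visited by at least one robot.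
   Context: Let $\mathcal{G}=(\mathcal{V},\mathcal{E})$ be a finite simple graph with node set $\mathcal{V}=\{1,\dots,V\}$ and edge weights $\omega:\mathcal{E}\to(0,1]$ (survival probabilities). A path $\rho$ is a sequence of nodes $\rho(0),\dots,\rho(\lvert\rho\rvert)$ with $(\rho(n-1),\rho(n))\in\mathcal{E}$ for each $n$. For a path $\rho$, let $s_n(\rho)$, $n=1,\dots,\lvert\rho\rvert$, be independent Bernoulli variables with $\mathbb{P}\{s_n(\rho)=1\}=\omega((\rho(n-1),\rho(n)))$, $a_n(\rho)=\prod_{i=1}^n s_i(\rho)$, and $z_j(\rho)=\max_{n=1,\dots,\lvert\rho\rvert} a_n(\rho)\,\mathbb{I}\{\rho(n)=j\}$; random variables for distinct paths are independent. Let $\mathbb{I}_j(\rho)=1$ if $\rho(n)=j$ for some $n\in\{1,\dots,\lvert\rho\rvert\}$, else $0$. Given start node $v_s$, terminal node $v_t$ and $p_s\in(0,1]$, $\mathcal{X}(p_s,\omega)$ is the (assumed nonempty) set of paths $\rho$ with $\rho(0)=v_s$, $\rho(\lvert\rho\rvert)=v_t$ and $\mathbb{P}\{a_{\lvert\rho\rvert}(\rho)=1\}\ge p_s$ (equivalently, an orienteering feasibility constraint on the graph with edge weights $-\log\omega(e)$ and budget $-\log p_s$). Node priorities $d_j>0$ are given. The Team Surviving Orienteers problem with $K$ robots is to choose $\rho_1,\dots,\rho_K\in\mathcal{X}(p_s,\omega)$ maximizing $J(\{\rho_k\}_{k=1}^K)$. Define $\zeta_j=\max_{\rho\in\mathcal{X}(p_s,\omega)}\mathbb{E}[z_j(\rho)]$.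 *)

(* Defs.v *)
From HB Require Import structures.
From mathcomp Require Import all_boot all_order all_algebra.
From mathcomp Require Import reals sequences exp.
Set Implicit Arguments. Unset Strict Implicit. Unset Printing Implicit Defensive.
Import Order.TTheory GRing.Theory Num.Theory.
Local Open Scope ring_scope.

Section TSO.
Variable R : realType.
Variable T : finType.

(* A path rho is a nonempty sequence of nodes rho(0) :: rho(1) :: ... :: rho(|rho|).
   rho(n) = nth x0 rho n (the default is irrelevant for n <= |rho|). *)
Definition plen (rho : seq T) : nat := (size rho).-1.

Definition edge_probs (omega : T -> T -> R) (rho : seq T) : seq R :=
  if rho is x :: r then pairmap omega x r else [::].

Fixpoint bseqs (n : nat) : seq (seq bool) :=
  if n is n'.+1 then [seq b :: s | b <- [:: true; false], s <- bseqs n'] else [:: [::]].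

Fixpoint bern_weight (ps : seq R) (s : seq bool) : R :=
  match ps, s with
  | p :: ps', b :: s' => (if b then p else 1 - p) * bern_weight ps' s'
  | _, _ => 1
  end.

(* Expectation of a function of the outcome (s_1..s_|rho|) of path rho. *)
Definition Epath (omega : T -> T -> R) (rho : seq T) (f : seq bool -> R) : R :=
  \sum_(s <- bseqs (plen rho)) bern_weight (edge_probs omega rho) s * f s.

(* a_n = prod_{i=1}^n s_i  (s is stored 0-indexed: s_i = nth false s (i-1)). *)
Definition a_n (n : nat) (s : seq bool) : R := (all id (take n s))%:R.

(* z_j(rho) = max_{n=1..|rho|} a_n * I{rho(n) = j}  (0 if |rho| = 0). *)
Definition z_j (j : T) (rho : seq T) (s : seq bool) : R :=
  \big[Num.max/0]_(i < plen rho) (a_n i.+1 s * (nth j rho i.+1 == j)%:R).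

Definition Ez (omega : T -> T -> R) (j : T) (rho : seq T) : R :=
  Epath omega rho (z_j j rho).

Definition surv_prob (omega : T -> T -> R) (rho : seq T) : R :=
  Epath omega rho (a_n (plen rho)).

Definition Ivis (j : T) (rho : seq T) : R := (j \in behead rho)%:R.

Definition inX (e : rel T) (omega : T -> T -> R) (vs vt : T) (ps : R)
  (rho : seq T) : Prop :=
  exists rest, [/\ rho = vs :: rest, path e vs rest, last vs rest = vt
                 & ps <= surv_prob omega rho].

(* Joint expectation over the product space of independent outcomes of a list
   of paths (random variables for distinct paths are independent). *)
Fixpoint Ejoint (omega : T -> T -> R) (rs : seq (seq T))
  (f : seq (seq bool) -> R) : R :=
  if rs is rho :: rs' then
    \sum_(s <- bseqs (plen rho))
       bern_weight (edge_probs omega rho) s *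
       Ejoint omega rs' (fun ss => f (s :: ss))
  else f [::].

Definition Jobj (omega : T -> T -> R) (d : T -> R) (rs : seq (seq T)) : R :=
  \sum_j d j * Ejoint omega rs
     (fun ss => 1 - \prod_(k < size rs) (1 - z_j j (nth [::] rs k) (nth [::] ss k))).

Definition greedy_nu (omega : T -> T -> R) (zeta d : T -> R)
  (prev : seq (seq T)) (j : T) : R :=
  zeta j * d j * \prod_(r <- prev) (1 - Ez omega j r).

Fixpoint greedy (omega : T -> T -> R) (zeta d : T -> R)
  (Orient : (T -> R) -> seq T) (L : nat) : seq (seq T) :=
  if L is L'.+1 then
    let prev := greedy omega zeta d Orient L' in
    rcons prev (Orient (greedy_nu omega zeta d prev))
  else [::].

End TSO.

Arguments Ivis {R T} j rho.
Arguments a_n {R} n s.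
Arguments z_j {R T} j rho s.

(* Main.v *)
Require Import Defs.
From HB Require Import structures.
From mathcomp Require Import all_boot all_order all_algebra.
From mathcomp Require Import reals sequences exp.
From mathcomp Require Import ring lra.
Import Order.TTheory GRing.Theory Num.Theory.
Local Open Scope ring_scope.
Set Implicit Arguments. Unset Strict Implicit.

Lemma sum_bw (R : realType) n (ps : seq R) : size ps = n ->
  \sum_(s <- bseqs n) bern_weight ps s = 1.
Proof.
elim: n ps => [|n IH] [|p ps] //=; first by rewrite big_seq1.
move=> [] /IH H.
rewrite big_cat big_cat /= !big_map big_nil addr0 /=.
by rewrite -!mulr_sumr H !mulr1 addrC subrK.
Qed.

Lemma bw_ge0 (R : realType) (ps : seq R) s : all (fun p => 0 <= p <= 1) ps ->
  0 <= bern_weight ps s.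
Proof.
elim: ps s => [|p ps IH] [|b s] //= /andP[/andP[p0 p1] H].
by apply: mulr_ge0; [case: b; rewrite ?subr_ge0|exact: IH].
Qed.

Lemma size_ep (R : realType) (T : finType) (omega : T -> T -> R) rho :
  size (edge_probs omega rho) = plen rho.
Proof. by case: rho => //= x r; rewrite size_pairmap. Qed.

Lemma sumw (R : realType) (T : finType) (omega : T -> T -> R) rho :
  \sum_(s <- bseqs (plen rho)) bern_weight (edge_probs omega rho) s = 1.
Proof. exact/sum_bw/size_ep. Qed.

Lemma Epath_const (R : realType) (T : finType) (omega : T -> T -> R) rho c :
  Epath omega rho (fun _ => c) = c.
Proof. by rewrite /Epath -mulr_suml sumw mul1r. Qed.

Lemma Epath_lin (R : realType) (T : finType) (omega : T -> T -> R) rho a b f :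
  Epath omega rho (fun s => a + b * f s) = a + b * Epath omega rho f.
Proof.
rewrite /Epath.
under eq_bigr do rewrite mulrDr.
rewrite big_split /= -mulr_suml sumw mul1r mulr_sumr; congr (_ + _).
by apply: eq_bigr => s _; rewrite mulrCA.
Qed.

Lemma Epath_le (R : realType) (T : finType) (omega : T -> T -> R) rho f g :
  all (fun p => 0 <= p <= 1) (edge_probs omega rho) ->
  (forall s, f s <= g s) -> Epath omega rho f <= Epath omega rho g.
Proof.
move=> H fg; rewrite /Epath; apply: ler_sum => s _.
by apply: ler_wpM2l; [exact: bw_ge0|exact: fg].
Qed.

Lemma good_path (R : realType) (T : finType) (e : rel T) (omega : T -> T -> R) x r :
  (forall x y, e x y -> 0 < omega x y <= 1) -> path e x r ->
  all (fun p => 0 <= p <= 1) (pairmap omega x r).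
Proof.
move=> He; elim: r x => //= y r IH x /andP[exy pr].
by rewrite IH // andbT; case/andP: (He _ _ exy) => /ltW -> ->.
Qed.

Lemma good_inX (R : realType) (T : finType) (e : rel T) (omega : T -> T -> R) vs vt ps rho :
  (forall x y, e x y -> 0 < omega x y <= 1) -> inX e omega vs vt ps rho ->
  all (fun p => 0 <= p <= 1) (edge_probs omega rho).
Proof. by move=> He [r [-> pr _ _]]; exact: good_path pr. Qed.

Lemma a_n01 (R : realType) n s : 0 <= (a_n n s : R) <= 1.
Proof. by rewrite /a_n; case: (all id (take n s)); rewrite /= ?lexx ?ler01. Qed.

Lemma Ivis01 (R : realType) (T : finType) (j : T) rho : 0 <= (Ivis j rho : R) <= 1.
Proof. by rewrite /Ivis; case: (j \in behead rho); rewrite /= ?lexx ?ler01. Qed.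

Lemma z_ge0 (R : realType) (T : finType) (j : T) rho s : 0 <= (z_j j rho s : R).
Proof.
rewrite /z_j; apply: (big_ind (fun x => 0 <= x)) => //.
  by move=> x y x0 y0; rewrite le_max x0.
move=> i _; apply: mulr_ge0; first by case/andP: (a_n01 R i.+1 s).
by case: (_ == _); rewrite /= ?lexx ?ler01.
Qed.

Lemma z_leI (R : realType) (T : finType) (j : T) rho s : (z_j j rho s : R) <= Ivis j rho.
Proof.
rewrite /z_j; apply: bigmax_le; first by case/andP: (Ivis01 R j rho).
move=> i _; case: eqP => [Hj|]; last by rewrite mulr0; case/andP: (Ivis01 R j rho).
rewrite mulr1 /Ivis.
have -> : j \in behead rho.
  apply/(nthP j); exists i; first by rewrite size_behead.
  by rewrite nth_behead.
by case/andP: (a_n01 R i.+1 s).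
Qed.

Lemma z_geI (R : realType) (T : finType) (j : T) rho s :
  Ivis j rho * a_n (plen rho) s <= (z_j j rho s : R).
Proof.
rewrite /Ivis; case: (boolP (j \in behead rho)) => [jin|]; last first.
  by rewrite mul0r z_ge0.
case/(nthP j): jin => i; rewrite size_behead nth_behead => ilt Hi.
rewrite mul1r /z_j.
apply: le_trans (le_bigmax _ _ (Ordinal ilt)).
rewrite /= Hi eqxx mulr1 /a_n.
case Ha: (all id (take (plen rho) s)) => //.
suff -> : all id (take i.+1 s) by [].
move: Ha; rewrite -(cat_take_drop i.+1 (take (plen rho) s)) all_cat take_takel //.
by case/andP.
Qed.

Lemma Ez_bounds (R : realType) (T : finType) (omega : T -> T -> R) j rho :
  all (fun p => 0 <= p <= 1) (edge_probs omega rho) ->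
  [/\ 0 <= Ez omega j rho, Ez omega j rho <= Ivis j rho &
      Ivis j rho * surv_prob omega rho <= Ez omega j rho].
Proof.
move=> H; rewrite /Ez /surv_prob; split.
- by rewrite -(Epath_const omega rho 0); apply: Epath_le => // s; exact: z_ge0.
- by rewrite -[X in _ <= X](Epath_const omega rho (Ivis j rho)); apply: Epath_le => // s; exact: z_leI.
- have := Epath_lin omega rho 0 (Ivis j rho) (a_n (plen rho)); rewrite add0r => <-.
  by apply: Epath_le => // s; rewrite add0r; exact: z_geI.
Qed.

Lemma Ejoint_ext (R : realType) (T : finType) (omega : T -> T -> R) rs f g :
  (forall ss, f ss = g ss) -> Ejoint omega rs f = Ejoint omega rs g.
Proof.
elim: rs f g => [|r rs IH] f g fg /=; first exact: fg.
by apply: eq_bigr => s _; congr (_ * _); apply: IH => ss.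
Qed.

Lemma Ejoint_lin (R : realType) (T : finType) (omega : T -> T -> R) rs a b G :
  Ejoint omega rs (fun ss => a + b * G ss) = a + b * Ejoint omega rs G.
Proof.
elim: rs a b G => [|r rs IH] a b G //=.
under eq_bigr do rewrite IH.
exact: (Epath_lin omega r a b (fun s => Ejoint omega rs (fun ss => G (s :: ss)))).
Qed.

Lemma Ejoint_prod (R : realType) (T : finType) (omega : T -> T -> R) rs
  (h : seq T -> seq bool -> R) :
  Ejoint omega rs (fun ss => \prod_(k < size rs) h (nth [::] rs k) (nth [::] ss k)) =
  \prod_(k < size rs) Epath omega (nth [::] rs k) (h (nth [::] rs k)).
Proof.
elim: rs => [|r rs IH] /=; first by rewrite !big_ord0.
rewrite big_ord_recl /=.
under eq_bigr => s _.
  rewrite (@Ejoint_ext _ _ _ _ _ (fun ss => 0 + h r s * \prod_(k < size rs) h (nth [::] rs k) (nth [::] ss k))); last first.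
    by move=> ss; rewrite add0r big_ord_recl.
  rewrite Ejoint_lin add0r IH.
  over.
by rewrite /Epath mulr_suml; apply: eq_bigr => s _; rewrite mulrA.
Qed.

Lemma Jobj_eq (R : realType) (T : finType) (omega : T -> T -> R) d rs :
  Jobj omega d rs = \sum_j d j * (1 - \prod_(r <- rs) (1 - Ez omega j r)).
Proof.
apply: eq_bigr => j _; congr (_ * _).
rewrite (@Ejoint_ext _ _ _ _ _ (fun ss => 1 + (-1) * \prod_(k < size rs) (fun r s => 1 - z_j j r s) (nth [::] rs k) (nth [::] ss k))); last first.
  by move=> ss; rewrite mulN1r.
rewrite Ejoint_lin (Ejoint_prod omega rs (fun r s => 1 - z_j j r s)) mulN1r (big_nth [::]) big_mkord.
congr (1 - _); apply: eq_bigr => k _.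
have := Epath_lin omega (nth [::] rs k) 1 (-1) (z_j j (nth [::] rs k)).
rewrite mulN1r /Ez => <-; apply: eq_bigr => s _; by rewrite mulN1r.
Qed.

Lemma prod01 (R : realType) (I : eqType) (X : seq I) (x : I -> R) :
  (forall r, r \in X -> 0 <= x r <= 1) ->
  0 <= \prod_(r <- X) (1 - x r) <= 1.
Proof.
elim: X => [|a X IH] H; first by rewrite big_nil ler01 lexx.
rewrite big_cons.
have /andP[q0 q1] : 0 <= \prod_(r <- X) (1 - x r) <= 1.
  by apply: IH => r rX; apply: H; rewrite inE rX orbT.
have /andP[x0 x1] := H a (mem_head _ _).
apply/andP; split; nra.
Qed.

Lemma union_bound (R : realType) (I : eqType) (X : seq I) (x : I -> R) :
  (forall r, r \in X -> 0 <= x r <= 1) ->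
  1 - \prod_(r <- X) (1 - x r) <= \sum_(r <- X) x r.
Proof.
elim: X => [|a X IH] H; first by rewrite big_nil big_nil subrr.
have H' : forall r, r \in X -> 0 <= x r <= 1.
  by move=> r rX; apply: H; rewrite inE rX orbT.
rewrite big_cons big_cons.
have /andP[q0 q1] := prod01 H'.
have /andP[x0 x1] := H a (mem_head _ _).
have := IH H'.
set P := \prod_(r <- X) _; set S := \sum_(r <- X) _ => HS.
have : x a * P <= x a by rewrite -{2}[x a]mulr1; apply: ler_wpM2l.
nra.
Qed.

Lemma sum_const_seq (R : realType) (I : Type) (X : seq I) (c : R) :
  \sum_(r <- X) c = (size X)%:R * c.
Proof.
elim: X => [|a X IH]; first by rewrite big_nil mul0r.
by rewrite big_cons IH /= -add1n natrD mulrDl mul1r.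
Qed.

Lemma pow_le_exp (R : realType) (a : R) n : 0 <= a <= 1 ->
  (1 - a) ^+ n <= expR (- a * n%:R).
Proof.
move=> /andP[a0 a1]; rewrite expRM_natr.
have h0 : 0 <= 1 - a by rewrite subr_ge0.
have h1 : 1 - a <= expR (- a) by exact: expR_ge1Dx.
elim: n => [|n IH]; first by rewrite !expr0.
by rewrite !exprS; apply: ler_pM => //; apply: exprn_ge0.
Qed.

Theorem theorem2 (R : realType) (T : finType) (e : rel T)
  (omega : T -> T -> R) (vs vt : T) (ps lambda : R) (d zeta : T -> R)
  (Orient : (T -> R) -> seq T) (K : nat) (Xstar : seq (seq T)) (L : nat) :
  (* finite simple graph with edge survival probabilities in (0,1] *)
  (forall x y, e x y = e y x) ->
  (forall x, ~~ e x x) ->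
  (forall x y, e x y -> 0 < omega x y <= 1) ->
  (forall x y, e x y -> omega x y = omega y x) ->
  0 < ps <= 1 ->
  (forall j, 0 < d j) ->
  (exists rho, inX e omega vs vt ps rho) ->
  (* zeta_j = max_{rho in X} E[z_j(rho)] *)
  (forall j, (forall rho, inX e omega vs vt ps rho -> Ez omega j rho <= zeta j) /\
             exists2 rho, inX e omega vs vt ps rho & Ez omega j rho = zeta j) ->
  (* Orienteering routine with guarantee 1/lambda *)
  1 <= lambda ->
  (forall nu : T -> R, (forall j, 0 <= nu j) ->
     inX e omega vs vt ps (Orient nu) /\
     forall rho, inX e omega vs vt ps rho ->
       lambda^-1 * (\sum_j Ivis j rho * nu j) <= \sum_j Ivis j (Orient nu) * nu j) ->
  (* X*_K optimal for the Team Surviving Orienteers problem with K robots *)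
  (0 < K)%N ->
  size Xstar = K ->
  (forall rho, rho \in Xstar -> inX e omega vs vt ps rho) ->
  (forall Y : seq (seq T), size Y = K ->
     (forall rho, rho \in Y -> inX e omega vs vt ps rho) ->
     Jobj omega d Y <= Jobj omega d Xstar) ->
  (K <= L)%N ->
  (1 - expR (- (ps * L%:R) / (lambda * K%:R))) * Jobj omega d Xstar
    <= Jobj omega d (greedy omega zeta d Orient L).
Proof.
move=> _ _ Hom _ /andP[ps0 ps1] d0 _ Hzeta lam1 HOr K0 sizeX HX _ _.
set inx := inX e omega vs vt ps.
have E01 : forall j r, inx r -> 0 <= Ez omega j r <= 1.
  move=> j r /(good_inX Hom) /(Ez_bounds j) [h0 h1 _].
  by rewrite h0 /=; apply: le_trans h1 _; case/andP: (Ivis01 R j r).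
have Z01 : forall j, 0 <= zeta j <= 1.
  by move=> j; case: (Hzeta j) => _ [r rX <-]; exact: E01.
have EleIz : forall j r, inx r -> Ez omega j r <= Ivis j r * zeta j.
  move=> j r rX; have [_ h1 _] := Ez_bounds j (good_inX Hom rX).
  move: h1; rewrite /Ivis; case: (j \in behead r) => /= h1.
    by rewrite mul1r; case: (Hzeta j) => H _; exact: H.
  by rewrite mul0r.
have EgeI : forall j r, inx r -> Ivis j r * ps <= Ez omega j r.
  move=> j r rX; have [_ _ h2] := Ez_bounds j (good_inX Hom rX).
  apply: le_trans h2; apply: ler_wpM2l; first by case/andP: (Ivis01 R j r).
  by case: rX => rest [_ _ _ ].
set q := fun j (X : seq (seq T)) => \prod_(r <- X) (1 - Ez omega j r).
have q01 : forall j X, (forall r, r \in X -> inx r) -> 0 <= q j X <= 1.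
  by move=> j X HX'; apply: prod01 => r /HX'; exact: E01.
have nu_ge0 : forall X, (forall r, r \in X -> inx r) ->
    forall j, 0 <= greedy_nu omega zeta d X j.
  move=> X HX' j; rewrite /greedy_nu; apply: mulr_ge0; first apply: mulr_ge0.
  - by case/andP: (Z01 j).
  - exact: ltW.
  - by case/andP: (q01 j X HX').
have Gfeas : forall l r, r \in greedy omega zeta d Orient l -> inx r.
  elim=> [|l IH] r //=; rewrite mem_rcons inE => /orP[/eqP->|/IH //].
  exact: (HOr _ (nu_ge0 _ IH)).1.
have J_ge0 : forall X, (forall r, r \in X -> inx r) -> 0 <= Jobj omega d X.
  move=> X HX'; rewrite Jobj_eq; apply: sumr_ge0 => j _; apply: mulr_ge0.
    exact: ltW.
  by rewrite subr_ge0; case/andP: (q01 j X HX').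
set OPT := Jobj omega d Xstar.
set c := ps / lambda.
have lam0 : 0 < lambda by apply: lt_le_trans lam1.
have c0 : 0 <= c by apply: divr_ge0 => //; exact: ltW.
have step : forall l, let G := greedy omega zeta d Orient l in
  c * (OPT - Jobj omega d G) <=
  K%:R * (Jobj omega d (greedy omega zeta d Orient l.+1) - Jobj omega d G).
  move=> l G.
  have GX : forall r, r \in G -> inx r := Gfeas l.
  set nu := greedy_nu omega zeta d G.
  have [rhX Hrh] := HOr nu (nu_ge0 G GX).
  set rh := Orient nu in rhX Hrh.
  have -> : greedy omega zeta d Orient l.+1 = rcons G rh by [].
  set Delta := \sum_j d j * q j G * Ez omega j rh.
  have -> : Jobj omega d (rcons G rh) - Jobj omega d G = Delta.
    rewrite !Jobj_eq -sumrB; apply: eq_bigr => j _.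
    rewrite /q big_rcons /=; ring.
  have each : forall rs, inx rs ->
      c * \sum_j d j * q j G * Ez omega j rs <= Delta.
    move=> rs rsX.
    have := Hrh rs rsX.
    move=> H1.
    apply: (@le_trans _ _ (ps * (lambda^-1 * \sum_j Ivis j rs * nu j))).
      rewrite /c -mulrA; apply: ler_wpM2l => //; first exact: ltW.
      apply: ler_wpM2l; first by rewrite invr_ge0 ltW.
      apply: ler_sum => j _; rewrite /nu /greedy_nu -/(q j G).
      have dq0 : 0 <= d j * q j G.
        by apply: mulr_ge0; [exact: ltW| case/andP: (q01 j G GX)].
      have -> : Ivis j rs * (zeta j * d j * q j G) = (Ivis j rs * zeta j) * (d j * q j G) by ring.
      rewrite (mulrC (d j * q j G)); apply: ler_wpM2r => //.
      exact: EleIz.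
    apply: le_trans (ler_wpM2l (ltW ps0) H1) _.
    rewrite mulr_sumr; apply: ler_sum => j _; rewrite /nu /greedy_nu -/(q j G).
    have dq0 : 0 <= d j * q j G.
      by apply: mulr_ge0; [exact: ltW| case/andP: (q01 j G GX)].
    have -> : ps * (Ivis j rh * (zeta j * d j * q j G)) = (ps * Ivis j rh * zeta j) * (d j * q j G) by ring.
    rewrite [X in _ <= X]mulrC; apply: ler_wpM2r => //.
    apply: le_trans (EgeI j rh rhX); rewrite (mulrC (Ivis j rh)).
    have : 0 <= ps * Ivis j rh by apply: mulr_ge0; [exact: ltW|case/andP: (Ivis01 R j rh)].
    case/andP: (Z01 j) => z0 z1 h; rewrite -[X in _ <= X]mulr1; exact: ler_wpM2l.
  have sumeach : \sum_(rs <- Xstar) c * \sum_j d j * q j G * Ez omega j rs <= K%:R * Delta.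
    rewrite -sizeX -sum_const_seq; rewrite big_seq [X in _ <= X]big_seq.
    by apply: ler_sum => rs /HX; exact: each.
  apply: le_trans sumeach.
  rewrite -mulr_sumr; apply: ler_wpM2l => //.
  rewrite exchange_big /OPT !Jobj_eq -sumrB; apply: ler_sum => j _.
  rewrite -mulr_sumr -mulrBr -mulrA; apply: ler_wpM2l; first exact: ltW.
  have /andP[qG0 qG1] := q01 j G GX.
  have /andP[qX0 qX1] := q01 j Xstar HX.
  have UB := union_bound (fun r rX => E01 j r (HX r rX)).
  rewrite -/(q j Xstar) in UB.
  have : q j G * (1 - q j Xstar) <= q j G * \sum_(i <- Xstar) Ez omega j i.
    exact: ler_wpM2l.
  move=> h; apply: le_trans h; rewrite -/(q j Xstar) -/(q j G); nra.
have Kp : 0 < (K%:R : R) by rewrite ltr0n.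
set al := c / K%:R.
have al0 : 0 <= al by apply: divr_ge0 => //; exact: ltW.
have al1 : al <= 1.
  rewrite /al ler_pdivrMr // mul1r; apply: (@le_trans _ _ 1).
    by rewrite /c ler_pdivrMr // mul1r; apply: le_trans lam1.
  by rewrite ler1n.
have J0 : Jobj omega d [::] = 0.
  by rewrite Jobj_eq big1 // => j _; rewrite big_nil subrr mulr0.
have rec : forall l, OPT - Jobj omega d (greedy omega zeta d Orient l) <= (1 - al) ^+ l * OPT.
  elim=> [|l IH]; first by rewrite /= J0 subr0 expr0 mul1r.
  move: IH.
  set J1 := Jobj omega d (greedy omega zeta d Orient l.+1).
  set J0' := Jobj omega d (greedy omega zeta d Orient l).
  move=> IH.
  have st : c * (OPT - J0') <= K%:R * (J1 - J0') := step l.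
  have h : al * (OPT - J0') <= J1 - J0'.
    by rewrite /al mulrAC ler_pdivrMr // [_ * K%:R]mulrC.
  have h2 : (1 - al) * (OPT - J0') <= (1 - al) * ((1 - al) ^+ l * OPT).
    by apply: ler_wpM2l => //; rewrite subr_ge0.
  rewrite exprS -mulrA; apply: le_trans h2.
  nra.
have fin := rec L.
have OPT0 : 0 <= OPT by apply: J_ge0.
have Hexp := pow_le_exp L (introT andP (conj al0 al1)).
have eqa : - (ps * L%:R) / (lambda * K%:R) = - al * L%:R.
  rewrite /al /c; field.
  by apply/andP; split; rewrite ?(gt_eqF lam0) ?(gt_eqF Kp).
rewrite eqa.
have : (1 - al) ^+ L * OPT <= expR (- al * L%:R) * OPT by apply: ler_wpM2r.
nra.
Qed.
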